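(* Let $K$ be a finite simplicial complex, $f$ an injective filtration function on $K$, and $n$ a positive integer. Assume $[a,b)$ (with $b$ finite) is a bar of the persistence module $\{H_n(K^f_r)\}_{r\in\mathbb{R}}$ represented by a class $[\alpha]\in H_n(K^f_a)$ born at $a$ and terminated at $b$, where $\alpha$ is an $n$-cycle. Choose $\varepsilon<(b-a)/4$ and assume that every other bar $[a_i,b_i)$ of $\{H_n(K^f_r)\}_{r\in\mathbb{R}}$ satisfies $a_i>a+2\varepsilon$ or $b_i<b-2\varepsilon$. Let $g$ be an injective filtration function with $\|f-g\|_\infty\le\varepsilon$, and assume that a matching of barcodes as in the stability theorem (see context) matches the bar $[a,b)$ to a bar $[a',b')$ of $\{H_n(K^g_r)\}_{r\in\mathbb{R}}$. Then: (1) the class of $\alpha$ in $\{H_n(K^g_r)\}_{r\in\mathbb{R}}$ terminates at $b'$; (2) if $\varepsilon\le\frac12\min\{R_u,R_l\}$, where $R_u=\min\{|f(\tau)-b|: \tau\text{ a birth }(n+1)\text{-simplex with } f(\tau)>b\}$ (or $\infty$ if none) and $R_l=\min\{|f(\tau)-b|: \tau\text{ a terminal }(n+1)\text{-simplex with } f(\tau)<b\}$ (or $\infty$ if none), then the simplex of $K$ terminating the bar $[a,b)$ in $K^f$ (the simplex with $f$-value $b$) is the same as the simplex terminating the bar $[a',b')$ in $K^g$ (the simplex with $g$-value $b'$).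
   Context: A filtration function on a finite simplicial complex $K$ is a map $f\colon K\to\mathbb{R}$ with $f(\sigma)\le f(\tau)$ whenever $\sigma$ is a face of $\tau$. Sublevel complexes are $K^f_r=f^{-1}((-\infty,r])$; homology is with coefficients in a fixed field $\mathbb{F}$, and $\{H_n(K^f_r)\}_r$ with inclusion-induced maps is a persistence module, decomposing as a finite direct sum of interval modules $\mathbb{F}_{[a_i,b_i)}$; the multiset of intervals is the barcode, its elements are bars. For a nontrivial class $[\alpha]\in H_n(K^f_r)$, its birth is the infimum of $q\le r$ such that $[\alpha]$ is in the image of $H_n(K^f_q)\to H_n(K^f_r)$ and its termination scale is the infimum of $q\ge r$ such that $[\alpha]$ maps to $0$ in $H_n(K^f_q)$. Since $f$ is injective, each simplex is either a birth simplex (adding it creates a new nontrivial homology class) or a terminal simplex (adding it makes a nontrivial homology class trivial). $\|f-g\|_\infty=\max_{\sigma\in K}|f(\sigma)-g(\sigma)|$. If $\|f-g\|_\infty\le\varepsilon$, with barcodes $\{[a_i,b_i)\}_{i\in I}$ of $f$ and $\{[a'_j,b'_j)\}_{j\in J}$ of $g$ in degree $n$, a matching as in the stability theorem is a bijection $\varphi\colon I'\to J'$ between subsets $I'\subseteq I$, $J'\subseteq J$ with $|a_i-a'_{\varphi(i)}|\le\varepsilon$ and $|b_i-b'_{\varphi(i)}|\le\varepsilon$ for $i\in I'$, $|a_i-b_i|\le2\varepsilon$ for $i\in I\setminus I'$ and $|a'_j-b'_j|\le2\varepsilon$ for $j\in J\setminus J'$ (such a matching exists by the stability theorem). *)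

(* Defs.v *)
From HB Require Import structures.
From mathcomp Require Import all_boot all_order all_algebra.
From mathcomp Require Import reals.
Set Implicit Arguments. Unset Strict Implicit. Unset Printing Implicit Defensive.
Import Order.TTheory GRing.Theory Num.Theory.
Local Open Scope ring_scope.

Section Simplicial.
Variables (V : finType) (F : fieldType) (R : realType).

Definition simplicial_complex (K : {set {set V}}) : Prop :=
  set0 \notin K /\
  forall s t : {set V}, s \in K -> t \subset s -> t != set0 -> t \in K.

Definition filtration (K : {set {set V}}) (f : {set V} -> R) : Prop :=
  forall s t : {set V}, s \in K -> t \in K -> t \subset s -> f t <= f s.

Definition injective_filtration (K : {set {set V}}) (f : {set V} -> R) : Prop :=
  filtration K f /\ {in K &, injective f}.

Definition sup_dist_le (K : {set {set V}}) (f g : {set V} -> R) (eps : R) : Prop :=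
  forall s, s \in K -> `|f s - g s| <= eps.

(* Simplicial chains with coefficients in F (finitely supported functions on
   vertex sets); an n-simplex is a vertex set of cardinality n+1. *)
Local Notation chain := {ffun {set V} -> F}.

(* Orientation: vertices are ordered by enum_rank; the incidence coefficient
   [s : t] for t = s minus its i-th vertex is (-1)^i. *)
Definition incidence (s t : {set V}) : F :=
  if (t \subset s) && (#|s :\: t| == 1%N) then
    \sum_(v in s :\: t)
       (-1) ^+ #|[set w in s | (enum_rank w < enum_rank v)%N]|
  else 0.

Definition bd (c : chain) : chain :=
  [ffun t => \sum_(s : {set V}) c s * incidence s t].

(* c is an n-chain of the subcomplex {s in K | P (f s)} (P describes a
   sublevel set, e.g. (fun x => x <= r) for K^f_r). *)
Definition sub_chain (K : {set {set V}}) (f : {set V} -> R) (P : R -> bool)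
    (n : nat) (c : chain) : Prop :=
  forall s, c s != 0 -> [/\ s \in K, #|s| = n.+1 & P (f s)].

Definition cycle_in K f P n (c : chain) : Prop :=
  sub_chain K f P n c /\ bd c = 0.

Definition boundary_in K f P n (z : chain) : Prop :=
  exists c : chain, sub_chain K f P n.+1 c /\ bd c = z.

Definition le_at (r : R) : R -> bool := fun x => x <= r.
Definition lt_at (r : R) : R -> bool := fun x => x < r.

Definition is_inf (S : R -> Prop) (t : R) : Prop :=
  (forall q, S q -> t <= q) /\ (forall e, 0 < e -> exists q, S q /\ q < t + e).

(* Birth of the class [alpha] in H_n(K^f_r): infimum of q <= r such that
   [alpha] lies in the image of H_n(K^f_q) -> H_n(K^f_r). *)
Definition birth_scale K f n (r : R) (alpha : chain) (t : R) : Prop :=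
  is_inf (fun q => q <= r /\
     exists beta, cycle_in K f (le_at q) n beta /\
                  boundary_in K f (le_at r) n (alpha - beta)) t.

Definition term_scale K f n (r : R) (alpha : chain) (t : R) : Prop :=
  is_inf (fun q => r <= q /\ boundary_in K f (le_at q) n alpha) t.

(* Extended death values: None stands for +oo. *)
Definition alive_end (d : option R) (r : R) : bool :=
  if d is Some y then r < y else true.

(* Interval decomposition of the persistence module {H_n(K^f_r)}_r into
   interval modules F_[birth i, death i), i < m, the summand i being
   spanned by the images of the class of the cycle rep i. *)
Definition interval_decomposition K f n (m : nat) (birth : 'I_m -> R)
    (death : 'I_m -> option R) (rep : 'I_m -> chain) : Prop :=
  (forall i, cycle_in K f (le_at (birth i)) n (rep i) /\
     (if death i is Some d then birth i < d /\ boundary_in K f (le_at d) n (rep i)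
      else True)) /\
  (forall r : R,
     let alive i := (birth i <= r) && alive_end (death i) r in
     (* the classes of the alive representatives are linearly independent
        in H_n(K^f_r) ... *)
     (forall c : 'I_m -> F,
        boundary_in K f (le_at r) n [ffun s => \sum_(i | alive i) c i * rep i s] ->
        forall i, alive i -> c i = 0) /\
     (* ... and span H_n(K^f_r). *)
     (forall z, cycle_in K f (le_at r) n z ->
        exists c : 'I_m -> F,
          boundary_in K f (le_at r) n (z - [ffun s => \sum_(i | alive i) c i * rep i s]))).

Definition close_end (d d' : option R) (eps : R) : Prop :=
  match d, d' with
  | Some x, Some y => `|x - y| <= eps
  | None, None => True
  | _, _ => False
  end.

Definition short_bar (a : R) (d : option R) (eps : R) : Prop :=
  if d is Some x then `|a - x| <= 2 * eps else False.

Definition stability_matching (eps : R) (m m' : nat)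
    (birth : 'I_m -> R) (death : 'I_m -> option R)
    (birth' : 'I_m' -> R) (death' : 'I_m' -> option R)
    (phi : 'I_m -> option 'I_m') : Prop :=
  [/\ (forall i i' j, phi i = Some j -> phi i' = Some j -> i = i'),
      (forall i j, phi i = Some j ->
         `|birth i - birth' j| <= eps /\ close_end (death i) (death' j) eps),
      (forall i, phi i = None -> short_bar (birth i) (death i) eps) &
      (forall j, (forall i, phi i <> Some j) -> short_bar (birth' j) (death' j) eps)].

(* s is a birth simplex: adding it (to K^f_{<f s}) creates a new nontrivial
   homology class (in degree dim s). *)
Definition birth_simplex (K : {set {set V}}) (f : {set V} -> R) (s : {set V}) : Prop :=
  s \in K /\
  exists z, cycle_in K f (le_at (f s)) #|s|.-1 z /\
    ~ exists beta, cycle_in K f (lt_at (f s)) #|s|.-1 beta /\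
                   boundary_in K f (le_at (f s)) #|s|.-1 (z - beta).

(* s is a terminal simplex: adding it makes a nontrivial homology class
   (in degree dim s - 1) trivial. *)
Definition terminal_simplex (K : {set {set V}}) (f : {set V} -> R) (s : {set V}) : Prop :=
  s \in K /\
  exists z, cycle_in K f (lt_at (f s)) #|s|.-2 z /\
    ~ boundary_in K f (lt_at (f s)) #|s|.-2 z /\
    boundary_in K f (le_at (f s)) #|s|.-2 z.

End Simplicial.

(* Main.v *)
Require Import Defs.
From HB Require Import structures.
From mathcomp Require Import all_boot all_order all_algebra.
From mathcomp Require Import reals.
From mathcomp Require Import ring lra.
From Stdlib Require Import Classical.
Import Order.TTheory GRing.Theory Num.Theory.
Set Implicit Arguments. Unset Strict Implicit. Unset Printing Implicit Defensive.
Local Open Scope ring_scope.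

Section Helpers.
Variables (V : finType) (F : fieldType) (R : realType).
Local Notation C := {ffun {set V} -> F}.

Lemma fin_argmax (T : finType) (P : pred T) (h : T -> R) :
  (exists x, P x) -> exists2 x, P x & forall y, P y -> h y <= h x.
Proof.
case=> x0 Px0; case: (arg_maxP h Px0) => i Pi H; exists i => // y /H //.
Qed.

Definition sc (k : F) (x : C) : C := [ffun s => k * x s].

Lemma bdD (x y : C) : bd (x + y) = bd x + bd y.
Proof.
apply/ffunP => t; rewrite /bd !ffunE -big_split /=; apply: eq_bigr => s _.
by rewrite ffunE mulrDl.
Qed.

Lemma bd0 : bd (0 : C) = 0.
Proof.
apply/ffunP => t; rewrite /bd !ffunE; apply: big1 => s _; by rewrite ffunE mul0r.
Qed.

Lemma bdN (x : C) : bd (- x) = - bd x.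
Proof.
apply/ffunP => t; rewrite /bd !ffunE -sumrN; apply: eq_bigr => s _.
by rewrite ffunE mulNr.
Qed.

Lemma bdB (x y : C) : bd (x - y) = bd x - bd y.
Proof. by rewrite bdD bdN. Qed.

Lemma bd_sc k (x : C) : bd (sc k x) = sc k (bd x).
Proof.
apply/ffunP => t; rewrite /bd /sc !ffunE mulr_sumr; apply: eq_bigr => s _.
by rewrite ffunE mulrA.
Qed.

Lemma bd_sum (I : Type) (r : seq I) (P : pred I) (G : I -> C) :
  bd (\sum_(i <- r | P i) G i) = \sum_(i <- r | P i) bd (G i).
Proof.
elim: r => [|i r IH]; first by rewrite !big_nil bd0.
by rewrite !big_cons; case: ifP => // _; rewrite bdD IH.
Qed.

Lemma ffun_sum_sc (I : eqType) (r : seq I) (P : pred I) (c : I -> F) (G : I -> C) :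
  [ffun s => \sum_(i <- r | P i) c i * G i s] = \sum_(i <- r | P i) sc (c i) (G i).
Proof. by apply/ffunP => s; rewrite ffunE sum_ffunE; apply: eq_bigr => i _; rewrite ffunE. Qed.

Section SubChain.
Variables (K : {set {set V}}) (f : {set V} -> R).

Lemma sub0 P k : sub_chain K f P k (0 : C).
Proof. by move=> s; rewrite ffunE eqxx. Qed.

Lemma subD P k (x y : C) : sub_chain K f P k x -> sub_chain K f P k y ->
  sub_chain K f P k (x + y).
Proof.
move=> hx hy s; rewrite ffunE; have [/eqP x0|/hx //] := boolP (x s == 0).
by rewrite x0 add0r => /hy.
Qed.

Lemma subN P k (x : C) : sub_chain K f P k x -> sub_chain K f P k (- x).
Proof. by move=> hx s; rewrite ffunE oppr_eq0 => /hx. Qed.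

Lemma subB P k (x y : C) : sub_chain K f P k x -> sub_chain K f P k y ->
  sub_chain K f P k (x - y).
Proof. by move=> hx hy; apply: subD => //; apply: subN. Qed.

Lemma sub_sc P k c (x : C) : sub_chain K f P k x -> sub_chain K f P k (sc c x).
Proof.
move=> hx s; rewrite ffunE; have [/eqP x0|/hx //] := boolP (x s == 0).
by rewrite x0 mulr0 eqxx.
Qed.

Lemma sub_mono (P Q : R -> bool) k (x : C) : (forall r, P r -> Q r) ->
  sub_chain K f P k x -> sub_chain K f Q k x.
Proof. by move=> PQ hx s /hx [? ? /PQ]. Qed.

Lemma sub_sum P k (I : Type) (r : seq I) (Pi : pred I) (G : I -> C) :
  (forall i, Pi i -> sub_chain K f P k (G i)) ->
  sub_chain K f P k (\sum_(i <- r | Pi i) G i).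
Proof.
move=> hG; elim: r => [|i r IH]; first by rewrite big_nil; apply: sub0.
rewrite big_cons; case: ifP => // /hG hi; exact: subD.
Qed.

Lemma bnd0 P k : boundary_in K f P k (0 : C).
Proof. by exists 0; split; [apply: sub0| apply: bd0]. Qed.

Lemma bndD P k (x y : C) : boundary_in K f P k x -> boundary_in K f P k y ->
  boundary_in K f P k (x + y).
Proof.
by case=> u [hu <-] [w [hw <-]]; exists (u + w); split; [apply: subD|apply: bdD].
Qed.

Lemma bndN P k (x : C) : boundary_in K f P k x -> boundary_in K f P k (- x).
Proof. by case=> u [hu <-]; exists (- u); split; [apply: subN|apply: bdN]. Qed.

Lemma bndB P k (x y : C) : boundary_in K f P k x -> boundary_in K f P k y ->
  boundary_in K f P k (x - y).
Proof. by move=> hx hy; apply: bndD => //; apply: bndN. Qed.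

Lemma bnd_sc P k c (x : C) : boundary_in K f P k x -> boundary_in K f P k (sc c x).
Proof. by case=> u [hu <-]; exists (sc c u); split; [apply: sub_sc|apply: bd_sc]. Qed.

Lemma bnd_mono (P Q : R -> bool) k (x : C) : (forall r, P r -> Q r) ->
  boundary_in K f P k x -> boundary_in K f Q k x.
Proof. by move=> PQ [u [hu <-]]; exists u; split => //; apply: sub_mono hu. Qed.

Lemma bnd_sum P k (I : Type) (r : seq I) (Pi : pred I) (G : I -> C) :
  (forall i, Pi i -> boundary_in K f P k (G i)) ->
  boundary_in K f P k (\sum_(i <- r | Pi i) G i).
Proof.
move=> hG; elim: r => [|i r IH]; first by rewrite big_nil; apply: bnd0.
rewrite big_cons; case: ifP => // /hG hi; exact: bndD.
Qed.

Lemma bnd_le q q' k (x : C) : q <= q' ->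
  boundary_in K f (le_at q) k x -> boundary_in K f (le_at q') k x.
Proof. by move=> hq; apply: bnd_mono => r; rewrite /le_at => /le_trans; apply. Qed.

Lemma sub_le q q' k (x : C) : q <= q' ->
  sub_chain K f (le_at q) k x -> sub_chain K f (le_at q') k x.
Proof. by move=> hq; apply: sub_mono => r; rewrite /le_at => /le_trans; apply. Qed.

End SubChain.

Lemma sub_shift (K : {set {set V}}) (f g : {set V} -> R) (eps q : R) k (x : C) : sup_dist_le K f g eps ->
  sub_chain K f (le_at q) k x -> sub_chain K g (le_at (q + eps)) k x.
Proof.
move=> hd hx s /hx [sK cs]; rewrite /le_at => fs; split => //.
have := hd s sK; rewrite ler_norml => /andP [h1 h2]; lra.
Qed.

Lemma bnd_shift (K : {set {set V}}) (f g : {set V} -> R) (eps q : R) k (x : C) : sup_dist_le K f g eps ->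
  boundary_in K f (le_at q) k x -> boundary_in K g (le_at (q + eps)) k x.
Proof. by move=> hd [u [hu <-]]; exists u; split => //; apply: sub_shift hu. Qed.

End Helpers.

Section Decomp.
Variables (V : finType) (F : fieldType) (R : realType).
Local Notation C := {ffun {set V} -> F}.

Definition aliveD m (birth : 'I_m -> R) (death : 'I_m -> option R) (r : R) i :=
  (birth i <= r) && alive_end (death i) r.

Lemma sc0 (x : C) : sc 0 x = 0.
Proof. by apply/ffunP => s; rewrite !ffunE mul0r. Qed.

Lemma dead_before m (birth : 'I_m -> R) death r q i : r <= q ->
  aliveD birth death r i -> ~~ aliveD birth death q i ->
  exists2 d, death i = Some d & d <= q.
Proof.
move=> rq /andP [br _]; rewrite /aliveD (le_trans br rq) /=.
case: (death i) => [d|] //= qd; exists d => //; by rewrite leNgt.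
Qed.

Lemma decomp_key (K : {set {set V}}) (g : {set V} -> R) n m
  (birth : 'I_m -> R) death (rep : 'I_m -> C) (r : R) (c : 'I_m -> F) (z : C) :
  interval_decomposition K g n birth death rep ->
  boundary_in K g (le_at r) n
    (z - [ffun s => \sum_(i | aliveD birth death r i) c i * rep i s]) ->
  forall q, r <= q ->
  (boundary_in K g (le_at q) n z <->
   (forall i, aliveD birth death r i -> c i != 0 -> exists2 d, death i = Some d & d <= q)).
Proof.
move=> [hrep hlev] hz q rq.
set S := [ffun s => \sum_(i | aliveD birth death r i) c i * rep i s].
have hzq := bnd_le rq hz.
have repb : forall i d, death i = Some d -> d <= q -> boundary_in K g (le_at q) n (rep i).
  move=> i d hd dq; have [_] := hrep i; rewrite hd => -[_ hb]; exact: bnd_le dq hb.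
split.
- move=> hb.
  have hS : boundary_in K g (le_at q) n S.
    have -> : S = z - (z - S) by rewrite opprB addrC subrK.
    exact: bndB.
  pose A := aliveD birth death r.
  pose Q := aliveD birth death q.
  pose c' i := if A i then c i else 0.
  have [hind _] := hlev q.
  have hT : boundary_in K g (le_at q) n [ffun s => \sum_(i | Q i) c' i * rep i s].
    have -> : [ffun s => \sum_(i | Q i) c' i * rep i s] =
        S - \sum_(i | A i && ~~ Q i) sc (c i) (rep i).
      apply/ffunP => s; rewrite !ffunE sum_ffunE.
      rewrite [X in _ = X - _](bigID Q) /= -addrA.
      rewrite [X in _ + X](_ : _ = 0) ?addr0; last first.
        by apply/eqP; rewrite subr_eq0; apply/eqP; apply: eq_bigr => i _; rewrite ffunE.
      rewrite (bigID A) /= [X in _ + X]big1 ?addr0; last first.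
        by move=> i /andP [_ /negbTE]; rewrite /c' => ->; rewrite mul0r.
      apply: eq_big => [i|i /andP [_ Ai]]; first by rewrite andbC.
      by rewrite /c' Ai.
    apply: bndB => //; apply: bnd_sum => i /andP [Ai nQi].
    have [d hd dq] := dead_before rq Ai nQi.
    by apply: bnd_sc; apply: repb hd dq.
  move=> i Ai ci; case Qi: (Q i).
    by have := hind _ hT i Qi; rewrite /c' /A Ai => /eqP; rewrite (negbTE ci).
  by apply: dead_before rq Ai _; rewrite -/Q Qi.
- move=> h.
  have -> : z = (z - S) + S by rewrite subrK.
  apply: bndD => //.
  rewrite /S ffun_sum_sc; apply: bnd_sum => i Ai.
  have [/eqP -> |ci] := boolP (c i == 0); first by rewrite sc0; apply: bnd0.
  have [d hd dq] := h i Ai ci; apply: bnd_sc; exact: repb hd dq.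
Qed.

End Decomp.

Section DD.
Variables (V : finType) (F : fieldType).
Local Notation C := {ffun {set V} -> F}.

Definition sg (k : nat) : F := (-1) ^+ k.
Definition pos (s : {set V}) (v : V) := #|[set w in s | (enum_rank w < enum_rank v)%N]|.

Lemma inc_del (s : {set V}) v : v \in s -> incidence F s (s :\ v) = sg (pos s v).
Proof.
move=> vs.
have D : s :\: (s :\ v) = [set v].
  apply/setP => w; rewrite !inE; case: (eqVneq w v) => [->|] /=; [by rewrite vs | by case: (w \in s)].
by rewrite /incidence D subsetDl cards1 eqxx /= big_set1.
Qed.

Lemma inc_nz (s t : {set V}) : incidence F s t != 0 -> exists2 v, v \in s & t = s :\ v.
Proof.
rewrite /incidence; case E: ((t \subset s) && (#|s :\: t| == 1)); last by rewrite eqxx.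
move=> _; move/andP: E => [ts /cards1P [v hv]].
exists v.
  have: v \in s :\: t by rewrite hv set11.
  by rewrite inE => /andP [].
by rewrite -hv setDDr setDv set0U; apply/esym/setIidPr.
Qed.

Lemma sum_inc_del (G : {set V} -> F) s :
  \sum_t incidence F s t * G t = \sum_(v in s) sg (pos s v) * G (s :\ v).
Proof.
rewrite (bigID (fun t => t \in [set s :\ v | v in s])) /= [X in _ + X]big1 ?addr0.
  rewrite big_imset /=; first by apply: eq_bigr => v vs; rewrite inc_del.
  move=> v w vs ws /= h; have: v \notin s :\ v by rewrite in_setD1 eqxx.
  by rewrite h in_setD1 vs andbT negbK => /eqP.
move=> t /negP nt; case: (eqVneq (incidence F s t) 0) => [->|/inc_nz [v vs tv]].
  by rewrite mul0r.
by exfalso; apply: nt; rewrite tv; apply/imsetP; exists v.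
Qed.

Lemma pos_lt (s : {set V}) v w : v \in s -> (enum_rank v < enum_rank w)%N ->
  pos s w = (pos (s :\ v) w).+1.
Proof.
move=> vs h; rewrite /pos (cardsD1 v) inE vs h /= add1n; congr (_.+1).
by apply: eq_card => x; rewrite !inE andbA.
Qed.

Lemma pos_gt (s : {set V}) v w : (enum_rank w < enum_rank v)%N ->
  pos (s :\ v) w = pos s w.
Proof.
move=> h; rewrite /pos; apply: eq_card => x; rewrite !inE.
case: (eqVneq x v) => [->|] /=; last by [].
by rewrite ltnNge (ltnW h) andbF.
Qed.

Lemma setD1C (s : {set V}) v w : s :\ v :\ w = s :\ w :\ v.
Proof. by rewrite !setDDl setUC. Qed.

Lemma dd_inc (s u : {set V}) : \sum_t incidence F s t * incidence F t u = 0.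
Proof.
rewrite sum_inc_del.
case: (boolP [exists v0, exists w0, [&& v0 \in s, w0 \in s,
          (enum_rank v0 < enum_rank w0)%N & u == s :\ v0 :\ w0]]) => [|none].
  move=> /existsP [v0 /existsP [w0 /and4P [v0s w0s lt /eqP hu]]].
  have wv : w0 != v0.
    by apply/eqP => e; move: lt; rewrite e ltnn.
  rewrite (bigD1 v0) //= (bigD1 w0) /=; last by rewrite w0s wv.
  rewrite big1 ?addr0; last first.
    move=> v /andP [/andP [vs vv0] vw0].
    case: (eqVneq (incidence F (s :\ v) u) 0) => [->|/inc_nz [w]]; first by rewrite mulr0.
    move=> _ hu'.
    have : v \in u by rewrite hu !in_setD1 vs vv0 vw0.
    by rewrite hu' !in_setD1 eqxx andbF.
  rewrite {1}hu inc_del; last by rewrite in_setD1 wv.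
  rewrite hu setD1C inc_del; last by rewrite in_setD1 eq_sym wv.
  rewrite (pos_lt v0s lt) (pos_gt _ lt) /sg exprS; ring.
rewrite big1 // => v vs.
case: (eqVneq (incidence F (s :\ v) u) 0) => [->|/inc_nz [w]]; first by rewrite mulr0.
rewrite in_setD1 => /andP [wv ws] hu; exfalso; move/negP: none; apply.
case: (ltngtP (enum_rank v) (enum_rank w)) => h.
- by apply/existsP; exists v; apply/existsP; exists w; rewrite vs ws h hu eqxx.
- by apply/existsP; exists w; apply/existsP; exists v; rewrite vs ws h hu setD1C eqxx.
- by move/ord_inj/enum_rank_inj: h => e; rewrite e eqxx in wv.
Qed.

Lemma bd_bd (c : C) : bd (bd c) = 0.
Proof.
apply/ffunP => u; rewrite /bd !ffunE.
rewrite (eq_bigr (fun t => \sum_s c s * incidence F s t * incidence F t u)); last first.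
  by move=> t _; rewrite ffunE mulr_suml.
rewrite exchange_big /= big1 // => s _.
rewrite (eq_bigr (fun t => c s * (incidence F s t * incidence F t u))); last first.
  by move=> t _; rewrite mulrA.
by rewrite -mulr_sumr dd_inc mulr0.
Qed.

End DD.

Section Simp.
Variables (V : finType) (F : fieldType) (R : realType).
Local Notation C := {ffun {set V} -> F}.
Variables (K : {set {set V}}) (f : {set V} -> R).
Hypothesis hK : simplicial_complex K.
Hypothesis hf : injective_filtration K f.

Definition delta (rho : {set V}) : C := [ffun s => (s == rho)%:R].

Lemma bd_delta rho t : bd (delta rho) t = incidence F rho t.
Proof.
rewrite /bd ffunE (bigD1 rho) //= ffunE eqxx mul1r big1 ?addr0 // => s /negbTE sr.
by rewrite ffunE sr mul0r.
Qed.

Lemma sub_delta (P : R -> bool) k rho : rho \in K -> #|rho| = k.+1 -> P (f rho) ->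
  sub_chain K f P k (delta rho).
Proof.
move=> rK cr Pr s; rewrite ffunE; case: (eqVneq s rho) => [->|] //=.
by rewrite eqxx.
Qed.

Lemma finj s t : s \in K -> t \in K -> f s = f t -> s = t.
Proof. by case: hf => _ hi sK tK; apply: hi. Qed.

Lemma face_lt rho t : rho \in K -> (1 < #|rho|)%N -> incidence F rho t != 0 ->
  [/\ t \in K, #|t| = #|rho|.-1, t \subset rho & f t < f rho].
Proof.
move=> rK r1 /inc_nz [v vr ->].
have ct : #|rho :\ v| = #|rho|.-1 by rewrite (cardsD1 v rho) vr.
have sub : rho :\ v \subset rho by apply: subsetDl.
have ne : rho :\ v != rho.
  by apply/eqP => e; move: (vr); rewrite -{1}e in_setD1 eqxx.
case: hK => h0 hcl.
have tK : rho :\ v \in K.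
  apply: hcl rK sub _; rewrite -card_gt0 ct.
  by move: r1; case: #|rho| => [|[|k]].
split => //.
case: hf => hfil hi.
rewrite lt_neqAle hfil // andbT; apply/eqP => e.
by move/negP: ne; apply; apply/eqP; apply: finj.
Qed.

Lemma not_terminal n rho : rho \in K -> #|rho| = n.+2 -> ~ terminal_simplex F K f rho ->
  exists w : C, sub_chain K f (lt_at (f rho)) n.+1 w /\ bd w = bd (delta rho).
Proof.
move=> rK cr nt.
case: (classic (exists w : C, sub_chain K f (lt_at (f rho)) n.+1 w /\ bd w = bd (delta rho))) => // nw.
exfalso; apply: nt; split => //; exists (bd (delta rho)); rewrite cr /=.
split; [split|split].
- move=> t; rewrite bd_delta => /(face_lt rK) [].
    by rewrite cr.
  by move=> tK; rewrite cr /= => ct _ ft; split.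
- exact: bd_bd.
- exact: nw.
- by exists (delta rho); split => //; apply: sub_delta => //; rewrite /le_at.
Qed.

Lemma birth_of n rho (w : C) : rho \in K -> #|rho| = n.+2 ->
  sub_chain K f (lt_at (f rho)) n.+1 w -> bd w = bd (delta rho) -> birth_simplex F K f rho.
Proof.
move=> rK cr hw hbw; split => //; exists (delta rho - w); rewrite cr /=.
have w0 : w rho = 0.
  by case: (eqVneq (w rho) 0) => // /hw [_ _]; rewrite /lt_at ltxx.
split.
- split; last by rewrite bdB hbw subrr.
  apply: subB; first by apply: sub_delta; rewrite /le_at.
  by apply: sub_mono hw => r; rewrite /lt_at /le_at => /ltW.
- case=> beta [[hbeta _] [d [hd hbd]]].
  have b0 : beta rho = 0.
    by case: (eqVneq (beta rho) 0) => // /hbeta [_ _]; rewrite /lt_at ltxx.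
  have : bd d rho = 0.
    rewrite /bd ffunE big1 // => s _.
    case: (eqVneq (d s) 0) => [->|/hd [sK cs fs]]; first by rewrite mul0r.
    case: (eqVneq (incidence F s rho) 0) => [->|nz]; first by rewrite mulr0.
    exfalso; have [_ _ _ frs] := face_lt sK (ltac:(by rewrite cs)) nz.
    by move: fs; rewrite /le_at leNgt frs.
  rewrite hbd !ffunE eqxx w0 b0 !subr0 => /eqP.
  by rewrite oner_eq0.
Qed.

End Simp.

Section Red.
Variables (V : finType) (F : fieldType) (R : realType).
Local Notation C := {ffun {set V} -> F}.
Variables (K : {set {set V}}) (f g : {set V} -> R) (eps b : R) (n : nat) (sigma : {set V}).
Hypothesis hK : simplicial_complex K.
Hypothesis hf : injective_filtration K f.
Hypothesis hd : sup_dist_le K f g eps.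
Hypothesis sK : sigma \in K.
Hypothesis fs : f sigma = b.
Hypothesis hRl : forall tau, terminal_simplex F K f tau -> #|tau| = n.+2 -> f tau < b ->
       2 * eps <= `|f tau - b|.

Lemma sc_0 k : sc k (0 : C) = 0.
Proof. by apply/ffunP => s; rewrite !ffunE mulr0. Qed.

Lemma distfg s : s \in K -> f s - eps <= g s <= f s + eps.
Proof.
move=> hs; have := hd hs; rewrite ler_norml => /andP [h1 h2].
apply/andP; split; lra.
Qed.

Definition band (t : R) := [set s in K | (b - 2 * eps < f s) && (f s < t)].

Lemma bad_step t (x : C) : sub_chain K f (le_at b) n.+1 x ->
  (forall s, x s != 0 -> g sigma < g s -> f s < t) ->
  (exists s, (x s != 0) && (g sigma < g s)) ->
  exists rho, exists x' : C, [/\ rho \in band t, band (f rho) \proper band t,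
     sub_chain K f (le_at b) n.+1 x', (forall s, x' s != 0 -> g sigma < g s -> f s < f rho)
     & bd x' = bd x].
Proof.
move=> hx ht [s0 hs0].
have [rho /andP [xr gr] rmax] := fin_argmax (P := fun s => (x s != 0) && (g sigma < g s)) f
   (ex_intro _ s0 hs0).
have [rK cr frb] := hx rho xr.
rewrite /le_at in frb.
have frt := ht rho xr gr.
have fneq : f rho != b.
  apply/eqP => e; have er : rho = sigma by apply: (finj hf rK sK); rewrite e fs.
  by move: gr; rewrite er ltxx.
have flt : f rho < b by rewrite lt_neqAle fneq frb.
have fgt : b - 2 * eps < f rho.
  have := distfg rK; have := distfg sK; rewrite fs => /andP [h1 h2] /andP [h3 h4]; lra.
have nt : ~ terminal_simplex F K f rho.
  move=> /hRl /(_ cr flt); rewrite ltr0_norm ?subr_lt0 //; lra.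
have [w [hw hbw]] := not_terminal hK hf rK cr nt.
have w0 : w rho = 0.
  by case: (eqVneq (w rho) 0) => // /hw [_ _]; rewrite /lt_at ltxx.
exists rho, (x - sc (x rho) (delta F rho - w)).
split.
- by rewrite inE rK fgt frt.
- apply/properP; split.
    apply/subsetP => s; rewrite !inE => /andP [-> /andP [-> h]] /=.
    exact: lt_trans h frt.
  by exists rho; rewrite !inE ?rK ?fgt ?frt ?ltxx ?andbF.
- apply: subB => //; apply: sub_sc; apply: subB.
    by apply: sub_delta.
  by apply: sub_mono hw => r; rewrite /lt_at /le_at => h; apply: ltW; apply: lt_le_trans h frb.
- move=> s; rewrite !ffunE; case: (eqVneq s rho) => [->|sr].
    by rewrite w0 subr0 mulr1n mulr1 subrr eqxx.
  rewrite mulr0n sub0r mulrN opprK => h gs.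
  case: (eqVneq (w s) 0) => [w0s|/hw [_ _]]; last by [].
  rewrite w0s mulr0 addr0 in h.
  have fsr := rmax s (introT andP (conj h gs)).
  have [sK' _ _] := hx s h.
  rewrite lt_neqAle fsr andbT; apply/eqP => e; move/eqP: sr; apply.
  exact: (finj hf sK' rK e).
- by rewrite bdB bd_sc bdB hbw subrr sc_0 subr0.
Qed.

Lemma reduceA N t (x : C) : (#|band t| <= N)%N -> sub_chain K f (le_at b) n.+1 x ->
  (forall s, x s != 0 -> g sigma < g s -> f s < t) ->
  exists x' : C, sub_chain K g (le_at (g sigma)) n.+1 x' /\ bd x' = bd x.
Proof.
elim: N t x => [|N IH] t x hN hx ht;
  (case: (boolP [exists s, (x s != 0) && (g sigma < g s)]) => [/existsP ex | nob];
   last first).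
- exists x; split => // s xs; have [sK' cs _] := hx s xs; split => //.
  rewrite /le_at leNgt; apply/negP => lt; move/negP: nob; apply; apply/existsP.
  by exists s; rewrite xs lt.
- have [rho [x' [rin _ _ _ _]]] := bad_step hx ht ex.
  by move: hN; rewrite leqn0 => /eqP/cards0_eq e; rewrite e inE in rin.
- exists x; split => // s xs; have [sK' cs _] := hx s xs; split => //.
  rewrite /le_at leNgt; apply/negP => lt; move/negP: nob; apply; apply/existsP.
  by exists s; rewrite xs lt.
- have [rho [x' [rin pr hx' ht' hb]]] := bad_step hx ht ex.
  have hc : (#|band (f rho)| <= N)%N.
    by have := proper_card pr; move=> h; rewrite -ltnS; apply: leq_trans h hN.
  have [x'' [h1 h2]] := IH (f rho) x' hc hx' ht'.
  by exists x''; split => //; rewrite h2.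
Qed.

End Red.

Unset Implicit Arguments. Set Strict Implicit. Set Printing Implicit Defensive.

Theorem theorem4p2
  (V : finType) (F : fieldType) (R : realType)
  (K : {set {set V}}) (f g : {set V} -> R) (n : nat) (eps : R)
  (* barcode of f in degree n, given by an interval decomposition *)
  (m : nat) (birthf : 'I_m -> R) (deathf : 'I_m -> option R)
  (repf : 'I_m -> {ffun {set V} -> F})
  (* barcode of g in degree n, given by an interval decomposition *)
  (m' : nat) (birthg : 'I_m' -> R) (deathg : 'I_m' -> option R)
  (repg : 'I_m' -> {ffun {set V} -> F})
  (phi : 'I_m -> option 'I_m')
  (i0 : 'I_m) (j0 : 'I_m') (a b a' b' : R) (alpha : {ffun {set V} -> F}) :
  simplicial_complex K ->
  injective_filtration K f ->
  (0 < n)%N ->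
  interval_decomposition K f n birthf deathf repf ->
  (* [a,b) (b finite) is a bar, represented by the n-cycle alpha, whose class
     in H_n(K^f_a) is nontrivial, born at a and terminated at b *)
  birthf i0 = a -> deathf i0 = Some b -> repf i0 = alpha ->
  cycle_in K f (le_at a) n alpha ->
  ~ boundary_in K f (le_at a) n alpha ->
  birth_scale K f n a alpha a ->
  term_scale K f n a alpha b ->
  eps < (b - a) / 4 ->
  (* every other bar [a_i, b_i) has a_i > a + 2 eps or b_i < b - 2 eps *)
  (forall i, i != i0 ->
     a + 2 * eps < birthf i \/
     (if deathf i is Some bi then bi < b - 2 * eps else False)) ->
  injective_filtration K g ->
  sup_dist_le K f g eps ->
  interval_decomposition K g n birthg deathg repg ->
  stability_matching eps birthf deathf birthg deathg phi ->
  (* the matching sends [a,b) to [a',b') *)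
  phi i0 = Some j0 -> birthg j0 = a' -> deathg j0 = Some b' ->
  (* (1) the class of alpha in {H_n(K^g_r)}_r (r = the scale at which alpha
         enters K^g) terminates at b' *)
  (forall r, sub_chain K g (le_at r) n alpha ->
     (forall q, q < r -> ~ sub_chain K g (le_at q) n alpha) ->
     term_scale K g n r alpha b')
  /\
  (* (2) if eps <= min(R_u, R_l)/2, the terminating simplices coincide *)
  ((forall tau, birth_simplex F K f tau -> #|tau| = n.+2 -> b < f tau ->
       2 * eps <= `|f tau - b|) ->
   (forall tau, terminal_simplex F K f tau -> #|tau| = n.+2 -> f tau < b ->
       2 * eps <= `|f tau - b|) ->
   exists2 sigma, sigma \in K & f sigma = b /\ g sigma = b').
Proof.
move=> hK hf n0 hdecf hbi hdi hri hca hnb hbs hts heps hgap hg hd hdecg hmatch hphi hbj hdj.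
have anz : exists s, alpha s != 0.
  case: (boolP [exists s, alpha s != 0]) => [/existsP //|none]; exfalso; apply: hnb.
  have -> : alpha = 0.
    apply/ffunP => s; rewrite ffunE; case: (eqVneq (alpha s) 0) => // h.
    by move/negP: none; case; apply/existsP; exists s.
  exact: bnd0.
have eps0 : 0 <= eps.
  case: anz => s /(proj1 hca) [sK _ _]; exact: le_trans (normr_ge0 _) (hd s sK).
have hab : 4 * eps < b - a by lra.
have hd' : sup_dist_le K g f eps by move=> s sK; rewrite distrC; apply: hd.
have hbf : boundary_in K f (le_at b) n alpha.
  by have [_] := (proj1 hdecf) i0; rewrite hdi hri => -[].
have F2f : forall q, boundary_in K f (le_at q) n alpha -> b <= q.
  move=> q hq; case: (lerP a q) => aq; first exact: (proj1 hts) q (conj aq hq).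
  by exfalso; apply: hnb; apply: bnd_le (ltW aq) hq.
have F2g : forall q, boundary_in K g (le_at q) n alpha -> b - eps <= q.
  move=> q hq; have := F2f _ (bnd_shift hd' hq); lra.
have hbg : boundary_in K g (le_at (b + eps)) n alpha := bnd_shift hd hbf.
have part1 : forall r, sub_chain K g (le_at r) n alpha ->
     (forall q, q < r -> ~ sub_chain K g (le_at q) n alpha) ->
     term_scale K g n r alpha b'.
  move=> r hr hmin.
  have ra : r <= a + eps.
    rewrite leNgt; apply/negP => lt; apply: (hmin (a + eps) lt).
    exact: sub_shift hd (proj1 hca).
  have hcyc : cycle_in K g (le_at r) n alpha := conj hr (proj2 hca).
  have [c hc] := (proj2 ((proj2 hdecg) r)) alpha hcyc.
  have hc' : boundary_in K g (le_at r) n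
      (alpha - [ffun s => \sum_(i | aliveD birthg deathg r i) c i * repg i s]) := hc.
  have key := decomp_key hdecg hc'.
  have Sne : exists i, aliveD birthg deathg r i && (c i != 0).
    case: (boolP [exists i, aliveD birthg deathg r i && (c i != 0)]) => [/existsP //|none].
    exfalso; have : boundary_in K g (le_at r) n alpha.
      apply/(key r (lexx r)) => i Ai ci; exfalso; move/negP: none; apply.
      by apply/existsP; exists i; rewrite Ai ci.
    move/F2g; lra.
  have hall := (proj1 (key (b + eps) ltac:(lra))) hbg.
  have [j /andP [Aj cj] jmax] := fin_argmax (fun i => odflt 0 (deathg i)) Sne.
  have [D hDj Db] := hall j Aj cj.
  have rD : r < D by move: Aj; rewrite /aliveD hDj => /andP [].
  have bjr : birthg j <= r by move: Aj; rewrite /aliveD => /andP [].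
  have bD : boundary_in K g (le_at D) n alpha.
    apply/(key D (ltW rD)) => i Ai ci.
    have [d hdi' _] := hall i Ai ci; exists d => //.
    by have := jmax i (introT andP (conj Ai ci)); rewrite hdi' hDj.
  have DgeE := F2g _ bD.
  have DE : D = b'.
    case: hmatch => hinj hclose hshf hshg.
    case: (boolP [exists i, phi i == Some j]) => [/existsP [i /eqP hi] | none].
      have [hbij hcl] := hclose i j hi.
      move: hcl; rewrite hDj; case E: (deathf i) => [x|] //= hx.
      have ii0 : i = i0.
        case: (eqVneq i i0) => // ne; have := hgap i ne; rewrite E.
        move: hbij hx; rewrite !ler_norml => /andP [h1 h2] /andP [h3 h4].
        clear -h1 h2 h3 h4 ra bjr DgeE; move: h1 h2 bjr.
        generalize (birthf i) (birthg j) => u v h1 h2 bjr.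
        by case=> h; exfalso; lra.
      by move: hi; rewrite ii0 hphi => -[ejj]; move: hdj; rewrite ejj hDj => -[].
    have := hshg j (fun i hi => ltac:(by move/negP: none; apply; apply/existsP; exists i; rewrite hi)).
    rewrite hDj /short_bar ler_norml => /andP [h1 h2]; lra.
  rewrite -DE; split.
    move=> q [rq bq]; have [d hdj' dq] := (proj1 (key q rq)) bq j Aj cj.
    by move: hdj'; rewrite hDj => -[->].
  move=> e e0; exists D; split; [split => //; exact: ltW | lra].
split => //.
move=> hRu hRl.
have [e [he hbe]] := hbf.
have nzchain : forall (x : {ffun {set V} -> F}), bd x = alpha -> exists s, x s != 0.
  move=> x hx; case: (boolP [exists s, x s != 0]) => [/existsP //|none].
  have x0 : x = 0.
    apply/ffunP => s; rewrite ffunE; case: (eqVneq (x s) 0) => // h.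
    by move/negP: none; case; apply/existsP; exists s.
  by move: anz; rewrite -hx x0 bd0 => -[s]; rewrite ffunE eqxx.
have [sigma es smax] := fin_argmax f (nzchain e hbe).
have [sK cs fsb] := he sigma es.
have fsig : f sigma = b.
  rewrite /le_at in fsb; apply/le_anti; rewrite fsb /=; apply: F2f; exists e; split => //.
  by move=> s hs; have [? ? _] := he s hs; split => //; rewrite /le_at smax.
have hA : boundary_in K g (le_at (g sigma)) n alpha.
  have [x' [hx' hbx']] := reduceA (N := #|band K f eps b (b + 1)|) hK hf hd sK fsig hRl
       (leqnn _) he (fun s es' _ => ltac:(by have [_ _ h] := he s es'; move: h; rewrite /le_at => h; lra)).
  by exists x'; split => //; rewrite hbx'.
have hB : forall q, q < g sigma -> ~ boundary_in K g (le_at q) n alpha.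
  move=> q qlt [x [hx hbx]].
  have [rho xr rmax] := fin_argmax f (nzchain x hbx).
  have [rK cr gq] := hx rho xr; rewrite /le_at in gq.
  have := distfg hd rK; have := distfg hd sK; rewrite fsig => /andP [d1 d2] /andP [d3 d4].
  case: (ltgtP (f rho) b) => [lt|gt|eq].
  - have : b <= f rho.
      apply: F2f; exists x; split => //.
      by move=> s hs; have [? ? _] := hx s hs; split => //; rewrite /le_at rmax.
    by rewrite leNgt lt.
  - have xr0 : x rho != 0 := xr.
    pose w := sc ((x rho)^-1) (e - (x - sc (x rho) (delta F rho))).
    have hw : sub_chain K f (lt_at (f rho)) n.+1 w.
      apply: sub_sc; apply: subB.
        by apply: sub_mono he => r'; rewrite /le_at /lt_at => h; apply: le_lt_trans h gt.
      move=> s; rewrite !ffunE; case: (eqVneq s rho) => [->|sr].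
        by rewrite mulr1n mulr1 subrr eqxx.
      rewrite mulr0n mulr0 subr0 => xs; have [sK' cs' _] := hx s xs; split => //.
      rewrite /lt_at lt_neqAle rmax // andbT; apply/eqP => e'; move/eqP: sr; apply.
      exact: (finj hf sK' rK e').
    have hbw : bd w = bd (delta F rho).
      apply/ffunP => t; rewrite bd_sc bdB bdB bd_sc hbe hbx !ffunE.
      by rewrite opprB addrC subrK mulrA mulVf // mul1r.
    have hbirth := birth_of hK hf rK cr hw hbw.
    have := hRu rho hbirth cr gt; rewrite gtr0_norm ?subr_gt0 // => h.
    exfalso; lra.
  - have er : rho = sigma by apply: (finj hf rK sK); rewrite eq fsig.
    by move: qlt; rewrite -er ltNge gq.
exists sigma => //; split => //.
have [s1 as1 amax] := fin_argmax g anz.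
have hr : sub_chain K g (le_at (g s1)) n alpha.
  by move=> s hs; have [? ? _] := proj1 hca s hs; split => //; rewrite /le_at amax.
have hmin : forall q, q < g s1 -> ~ sub_chain K g (le_at q) n alpha.
  by move=> q qlt /(_ s1 as1) [_ _]; rewrite /le_at leNgt qlt.
have T := part1 _ hr hmin.
have [s1K _ fs1] := proj1 hca s1 as1; rewrite /le_at in fs1.
have := distfg hd s1K; have := distfg hd sK; rewrite fsig => /andP [d1 d2] /andP [d3 d4].
apply/esym/le_anti/andP; split.
  apply: (proj1 T); split => //; lra.
rewrite leNgt; apply/negP => lt.
have [q [[rq bq] qlt]] := (proj2 T) (g sigma - b') ltac:(by rewrite subr_gt0).
by apply: (hB q) => //; move: qlt; rewrite addrC subrK.
Qed.
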